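(* Let $b^*>0$, let $f$ be a real function that is three times differentiable on an open interval containing $[0,b^*]$, with $f'''$ Lebesgue integrable on $[0,b^*]$. Let $a,b\in[0,b^*]$ with $a<b$, let $\alpha\in[0,1]$, $m\in(0,1]$, and let $q>1$, $p$ with $\frac1p+\frac1q=1$. If $|f'''|^q$ is $(\alpha,m)$-convex on $[0,b^*]$, then $$\left|\int_a^{mb}f(x)\,dx-\frac{mb-a}{6}\left[f(a)+4f\left(\frac{a+mb}{2}\right)+f(mb)\right]\right|\le \frac{(mb-a)^4}{96}\left(\frac{\Gamma(2p+1)\Gamma(p+1)}{\Gamma(3p+2)}\right)^{1/p}\left\{\left[\frac{|f'''(a)|^q+m\,[2^\alpha(1+\alpha)-1]\,|f'''(b)|^q}{2^\alpha(1+\alpha)}\right]^{1/q}+\left[\frac{(2^{1+\alpha}-1)|f'''(a)|^q+m\,[2^\alpha(1+\alpha)-(2^{1+\alpha}-1)]\,|f'''(b)|^q}{2^\alpha(1+\alpha)}\right]^{1/q}\right\},$$ where $\Gamma$ is the Gamma function.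
   Context: For $(\alpha,m)\in[0,1]^2$ and $b^*>0$, a function $g:[0,b^*]\to\mathbb{R}$ is called $(\alpha,m)$-convex on $[0,b^*]$ if for all $x,y\in[0,b^*]$ and $t\in[0,1]$, $$g(tx+m(1-t)y)\le t^\alpha g(x)+m(1-t^\alpha)g(y).$$ *)

(* Defs.v *)
From Stdlib Require Import Reals Lra ClassicalEpsilon.
Open Scope R_scope.

(* Real power with nonnegative base: x^y for x >= 0, with 0^0 = 1 and
   0^y = 0 for y <> 0 (Stdlib's Rpower is only meaningful for x > 0). *)
Definition powR (x y : R) : R :=
  if Req_EM_T x 0 then (if Req_EM_T y 0 then 1 else 0) else Rpower x y.

Definition alpha_m_convex (alpha m bstar : R) (g : R -> R) : Prop :=
  forall x y t, 0 <= x <= bstar -> 0 <= y <= bstar -> 0 <= t <= 1 ->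
    g (t * x + m * (1 - t) * y)
      <= powR t alpha * g x + m * (1 - powR t alpha) * g y.

Definition gamma_integrand (s : R) (t : R) : R :=
  if Rle_dec t 0 then 0 else Rpower t (s - 1) * exp (- t).

(* g = Gamma(s) = lim_{X -> +oo} int_0^X t^(s-1) e^(-t) dt  (Riemann integrals;
   adequate for s >= 1, which is the only range used below). *)
Definition is_Gamma (s g : R) : Prop :=
  forall eps, 0 < eps -> exists X0, forall X, X0 <= X ->
    exists pr : Riemann_integrable (gamma_integrand s) 0 X,
      Rabs (RiemannInt pr - g) < eps.

Definition Gamma (s : R) : R :=
  epsilon (inhabits 0) (fun g => is_Gamma s g).

(* Main.v *)
Require Import Defs.
From Stdlib Require Import Reals Lra Psatz ClassicalEpsilon FunctionalExtensionality.
From Coquelicot Require Import Coquelicot.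
Open Scope R_scope.

Definition rp (u y : R) : R := if Rle_dec u 0 then 0 else Rpower u y.

Lemma rp_pos u y : 0 < u -> rp u y = Rpower u y.
Proof. intros H; unfold rp; destruct (Rle_dec u 0); [lra|auto]. Qed.

Lemma rp_npos u y : u <= 0 -> rp u y = 0.
Proof. intros H; unfold rp; destruct (Rle_dec u 0); [auto|lra]. Qed.

Lemma rp_ge0 u y : 0 <= rp u y.
Proof. unfold rp; destruct (Rle_dec u 0); [lra|]. unfold Rpower; left; apply exp_pos. Qed.

Lemma rp_gt0 u y : 0 < u -> 0 < rp u y.
Proof. intros H; rewrite rp_pos by auto; unfold Rpower; apply exp_pos. Qed.

Lemma rp_S u y : rp u (y + 1) = u * rp u y.
Proof.
  unfold rp; destruct (Rle_dec u 0); [ring|].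
  rewrite Rpower_plus, Rpower_1 by lra; ring.
Qed.

Lemma rp_mult u v y : 0 <= u -> 0 <= v -> rp (u * v) y = rp u y * rp v y.
Proof.
  intros Hu Hv.
  destruct (Req_dec u 0) as [->|Hu']. rewrite Rmult_0_l, !rp_npos by lra; ring.
  destruct (Req_dec v 0) as [->|Hv']. rewrite Rmult_0_r, !rp_npos by lra; ring.
  rewrite !rp_pos by nra. rewrite Rpower_mult_distr by lra. auto.
Qed.

Lemma rp_plus u x y : rp u (x + y) = rp u x * rp u y.
Proof. unfold rp; destruct (Rle_dec u 0); [ring|]. apply Rpower_plus. Qed.

Lemma rp_opp u y : 0 < u -> rp u (- y) = / rp u y.
Proof. intros H; rewrite !rp_pos by auto; apply Rpower_Ropp. Qed.

Lemma rp_powR u y : 0 <= u -> y <> 0 -> powR u y = rp u y.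
Proof.
  intros Hu Hy; unfold powR, rp.
  destruct (Req_EM_T u 0); destruct (Rle_dec u 0); try lra.
  destruct (Req_EM_T y 0); lra.
Qed.

Lemma rp_1 u : 0 <= u -> rp u 1 = u.
Proof. intros H; unfold rp; destruct (Rle_dec u 0); [lra|]. apply Rpower_1; lra. Qed.

Lemma rp_0 u : 0 < u -> rp u 0 = 1.
Proof. intros H; rewrite rp_pos by auto; apply Rpower_O; auto. Qed.

Lemma rp_le_l u v y : 0 <= y -> 0 <= u <= v -> rp u y <= rp v y.
Proof.
  intros Hy Huv. destruct (Req_dec u 0) as [->|Hu].
  rewrite rp_npos by lra. apply rp_ge0.
  rewrite !rp_pos by lra. apply Rle_Rpower_l; lra.
Qed.

Lemma rp_rp u x y : 0 <= u -> rp (rp u x) y = rp u (x * y).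
Proof.
  intros Hu. destruct (Req_dec u 0) as [->|Hu'].
  rewrite (rp_npos 0 x) by lra. rewrite !(rp_npos 0) by lra. auto.
  rewrite (rp_pos u x) by lra. rewrite !rp_pos by (try (rewrite <- (rp_pos u x) by lra; apply rp_gt0); lra). apply Rpower_mult.
Qed.

Lemma rp_is_derive u y : 0 < u -> is_derive (fun v => rp v y) u (y * rp u (y - 1)).
Proof.
  intros H. rewrite rp_pos by auto.
  apply is_derive_ext_loc with (fun v => Rpower v y).
  - exists (mkposreal u H). intros v Hv. unfold ball in Hv; simpl in Hv.
    unfold AbsRing_ball, abs, minus, plus, opp in Hv; simpl in Hv.
    rewrite rp_pos; auto. apply Rabs_def2 in Hv. lra.
  - apply is_derive_Reals. apply derivable_pt_lim_power; auto.
Qed.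

Lemma rp_continuous u y : 0 < y -> continuous (fun v => rp v y) u.
Proof.
  intros Hy. destruct (Rlt_le_dec 0 u) as [Hu|Hu].
  - apply continuity_pt_filterlim. apply derivable_continuous_pt. exists (y * rp u (y-1)). apply is_derive_Reals, rp_is_derive; auto.
  - destruct (Rlt_le_dec u 0) as [Hu'|Hu'].
    + apply continuous_ext_loc with (fun _ => 0).
      * assert (Hp : 0 < - u) by lra. exists (mkposreal _ Hp). intros v Hv.
        unfold ball in Hv; simpl in Hv. unfold AbsRing_ball, abs, minus, plus, opp in Hv; simpl in Hv.
        apply Rabs_def2 in Hv. rewrite rp_npos; auto; lra.
      * apply continuous_const.
    + assert (u = 0) by lra; subst u.
      apply continuity_pt_filterlim. intros e He.
      exists (Rpower e (/ y)). split. unfold Rpower; apply exp_pos.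
      intros v [_ Hv]. rewrite (rp_npos 0) by lra.
      unfold dist in Hv |- *; simpl in Hv |- *. unfold R_dist in *.
      rewrite Rminus_0_r in *.
      unfold rp; destruct (Rle_dec v 0). rewrite Rabs_R0; lra.
      rewrite Rabs_pos_eq by (unfold Rpower; left; apply exp_pos).
      rewrite Rabs_pos_eq in Hv by lra.
      unfold Rpower in *. assert (ln v < / y * ln e).
      { rewrite <- (ln_exp (/ y * ln e)). apply ln_increasing; lra. }
      rewrite <- (exp_ln e) by lra.
      apply exp_increasing. replace (ln e) with (y * (/ y * ln e)) by (field; lra).
      apply Rmult_lt_compat_l; lra.
Qed.

Lemma mono (g dg : R -> R) a b : a <= b ->
  (forall x, a < x < b -> is_derive g x (dg x)) ->
  (forall x, a <= x <= b -> continuity_pt g x) ->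
  (forall x, a < x < b -> 0 <= dg x) -> g a <= g b.
Proof.
  intros Hab Hd Hc Hp. destruct (Req_dec a b) as [->|Hne]; [lra|].
  assert (Hlt : a < b) by lra.
  pose (pr1 := fun c (P : a < c < b) =>
    exist (fun l => derivable_pt_lim g c l) (dg c) (proj1 (is_derive_Reals g c (dg c)) (Hd c P))).
  pose (pr2 := fun c (P : a < c < b) => derivable_pt_id c).
  destruct (MVT g id a b pr1 pr2 Hlt Hc) as [c [P HM]].
  { intros; apply derivable_continuous_pt, derivable_pt_id. }
  rewrite derive_pt_id in HM. unfold pr1 in HM; simpl in HM. unfold id in HM.
  specialize (Hp c P). nra.
Qed.

Lemma cont_to_pt (g : R -> R) (x : R) : continuous g x -> continuity_pt g x.
Proof. intros H; apply continuity_pt_filterlim; exact H. Qed.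

Lemma RInt_is_derive (g : R -> R) (a x : R) : (forall y, continuous g y) -> is_derive (fun y => RInt g a y) x (g x).
Proof.
  intros Hg. apply (is_derive_RInt (V := R_CompleteNormedModule)) with a.
  - exists (mkposreal 1 Rlt_0_1). intros y _. apply RInt_correct, (ex_RInt_continuous (V := R_CompleteNormedModule)). intros; apply Hg.
  - apply Hg.
Qed.

Lemma RInt_cont (g : R -> R) (a x : R) : (forall y, continuous g y) -> continuity_pt (fun y => RInt g a y) x.
Proof.
  intros Hg. apply derivable_continuous_pt. exists (g x). apply is_derive_Reals, RInt_is_derive; auto.
Qed.

Lemma ftc (F g : R -> R) a b : a <= b ->
  (forall x, a < x < b -> is_derive F x (g x)) ->
  (forall x, a <= x <= b -> continuity_pt F x) ->
  (forall x, continuous g x) -> RInt g a b = F b - F a.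
Proof.
  intros Hab Hd Hc Hg.
  pose (G := fun x => RInt g a x - F x).
  assert (HD : forall x, a < x < b -> is_derive G x 0).
  { intros x Hx. unfold G. replace 0 with (g x - g x) by ring.
    apply is_derive_Reals. apply (derivable_pt_lim_minus (fun y => RInt g a y) F).
    apply is_derive_Reals, RInt_is_derive; auto. apply is_derive_Reals, Hd; auto. }
  assert (HC : forall x, a <= x <= b -> continuity_pt G x).
  { intros x Hx. unfold G. apply continuity_pt_minus. apply RInt_cont; auto. auto. }
  assert (H1 : G a <= G b). { apply (mono G (fun _ => 0) a b); auto; intros; lra. }
  assert (H2 : (fun x => - G x) a <= (fun x => - G x) b).
  { apply (mono (fun x => - G x) (fun _ => - 0) a b); auto.
    - intros x Hx. apply is_derive_Reals. apply (derivable_pt_lim_opp G). apply is_derive_Reals; auto.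
    - intros; apply continuity_pt_opp; auto.
    - intros; lra. }
  simpl in H2. unfold G in H1, H2. rewrite RInt_point in H1, H2. unfold zero in *; simpl in *. lra.
Qed.

Lemma exp_convex t x y : 0 <= t <= 1 ->
  exp (t * x + (1 - t) * y) <= t * exp x + (1 - t) * exp y.
Proof.
  intros Ht. set (m := t * x + (1 - t) * y).
  assert (Ex : exp x = exp m * exp (x - m)) by (rewrite <- exp_plus; f_equal; unfold m; ring).
  assert (Ey : exp y = exp m * exp (y - m)) by (rewrite <- exp_plus; f_equal; unfold m; ring).
  pose proof (exp_ineq1_le (x - m)). pose proof (exp_ineq1_le (y - m)).
  pose proof (exp_pos m).
  rewrite Ex, Ey.
  assert (t * (exp m * exp (x - m)) + (1 - t) * (exp m * exp (y - m))
          >= exp m * (t * (1 + (x - m)) + (1 - t) * (1 + (y - m)))).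
  { assert (exp m * (1 + (x - m)) <= exp m * exp (x - m)) by (apply Rmult_le_compat_l; lra).
    assert (exp m * (1 + (y - m)) <= exp m * exp (y - m)) by (apply Rmult_le_compat_l; lra).
    assert (t * (exp m * (1 + (x - m))) <= t * (exp m * exp (x - m))) by (apply Rmult_le_compat_l; lra).
    assert ((1-t) * (exp m * (1 + (y - m))) <= (1-t) * (exp m * exp (y - m))) by (apply Rmult_le_compat_l; lra).
    nra. }
  assert (t * (1 + (x - m)) + (1 - t) * (1 + (y - m)) = 1) by (unfold m; ring).
  nra.
Qed.

Lemma young a b p q : 0 <= a -> 0 <= b -> 0 < p -> 0 < q -> 1 / p + 1 / q = 1 ->
  a * b <= rp a p / p + rp b q / q.
Proof.
  intros Ha Hb Hp Hq Hpq.
  assert (0 <= rp a p / p) by (apply Rdiv_le_0_compat; [apply rp_ge0|lra]).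
  assert (0 <= rp b q / q) by (apply Rdiv_le_0_compat; [apply rp_ge0|lra]).
  destruct (Req_dec a 0) as [->|Ha']. lra.
  destruct (Req_dec b 0) as [->|Hb']. lra.
  rewrite !rp_pos by lra. unfold Rpower.
  assert (E : a * b = exp ((1/p) * (p * ln a) + (1 - 1/p) * (q * ln b))).
  { replace ((1/p) * (p * ln a) + (1 - 1/p) * (q * ln b)) with (ln a + ln b).
    rewrite exp_plus, !exp_ln by lra. auto.
    replace (1 - 1/p) with (1/q) by lra. field; lra. }
  rewrite E.
  assert (0 < 1/p) by (apply Rdiv_lt_0_compat; lra).
  assert (0 < 1/q) by (apply Rdiv_lt_0_compat; lra).
  eapply Rle_trans. apply exp_convex; lra.
  replace (1 - 1/p) with (1/q) by lra. lra.
Qed.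

Lemma fact_exp n t : 0 <= t -> (1 + t) ^ n <= INR (Factorial.fact n) * exp t.
Proof.
  revert t. induction n as [|n IH]; intros t Ht.
  - simpl. pose proof (exp_ineq1_le t). lra.
  - pose (g := fun u => INR (Factorial.fact (S n)) * exp u - (1 + u) ^ (S n)).
    assert (g 0 <= g t).
    { apply (mono g (fun u => INR (Factorial.fact (S n)) * exp u - INR (S n) * (1 + u) ^ n)); auto.
      - intros x Hx. unfold g. auto_derive; auto. simpl. ring.
      - intros x Hx. unfold g. apply derivable_continuous_pt. eexists. apply is_derive_Reals. auto_derive; auto.
      - intros x Hx. rewrite fact_simpl, mult_INR.
        specialize (IH x ltac:(lra)). pose proof (pos_INR (S n)). nra. }
    unfold g in H. rewrite exp_0, Rplus_0_r, pow1 in H.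
    assert (1 <= INR (Factorial.fact (S n))) by (apply (le_INR 1); apply Factorial.lt_O_fact).
    lra.
Qed.

Lemma nat_above r : exists K : nat, r <= INR K.
Proof.
  destruct (Rle_dec r 0). exists 0%nat; simpl; lra.
  destruct (nfloor_ex r ltac:(lra)) as [k Hk]. exists (S k). rewrite S_INR; lra.
Qed.

Definition gi (s t : R) : R := rp t (s - 1) * exp (- t).
Definition IG (s X : R) : R := RInt (gi s) 0 X.

Lemma gi_eq s : gamma_integrand s = gi s.
Proof. apply functional_extensionality; intro t. unfold gamma_integrand, gi, rp. destruct (Rle_dec t 0); ring. Qed.

Lemma exp_opp_cont t : continuous (fun t => exp (- t)) t.
Proof. apply continuity_pt_filterlim. apply derivable_continuous_pt. eexists. apply is_derive_Reals. auto_derive; auto. Qed.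

Lemma gi_cont s t : 1 < s -> continuous (gi s) t.
Proof.
  intros Hs. unfold gi. apply (continuous_mult (fun t => rp t (s - 1)) (fun t => exp (- t))).
  apply rp_continuous; lra. apply exp_opp_cont.
Qed.

Lemma gi_ge0 s t : 0 <= gi s t.
Proof. unfold gi. apply Rmult_le_pos. apply rp_ge0. left; apply exp_pos. Qed.

Lemma gi_ex s a b : 1 < s -> ex_RInt (gi s) a b.
Proof. intros Hs. apply (ex_RInt_continuous (V := R_CompleteNormedModule)). intros; apply gi_cont; auto. Qed.

Lemma IG_mono s X Y : 1 < s -> 0 <= X <= Y -> IG s X <= IG s Y.
Proof.
  intros Hs HXY. unfold IG. rewrite <- (RInt_Chasles (V := R_CompleteNormedModule) (gi s) 0 X Y) by (apply gi_ex; auto).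
  assert (0 <= RInt (gi s) X Y) by (apply RInt_ge_0; [lra|apply gi_ex; auto|intros; apply gi_ge0]).
  unfold plus; simpl. lra.
Qed.

Lemma IG_ge0 s X : 1 < s -> 0 <= X -> 0 <= IG s X.
Proof. intros Hs HX. apply RInt_ge_0; [lra|apply gi_ex; auto|intros; apply gi_ge0]. Qed.

Lemma gi_bound s K t : 1 < s -> s - 1 <= INR K -> 0 <= t ->
  gi s t <= INR (Factorial.fact (K + 2)) / (1 + t) ^ 2.
Proof.
  intros Hs HK Ht. unfold gi.
  destruct (Req_dec t 0) as [->|Ht'].
  { rewrite rp_npos by lra. rewrite Rmult_0_l. apply Rdiv_le_0_compat. left; apply INR_fact_lt_0. nra. }
  rewrite rp_pos by lra.
  assert (H1 : Rpower t (s - 1) <= (1 + t) ^ K).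
  { eapply Rle_trans. apply (Rle_Rpower_l t (1+t) (s-1)); lra.
    rewrite <- Rpower_pow by lra. apply Rle_Rpower; lra. }
  pose proof (fact_exp (K + 2) t Ht) as H2.
  assert (Hp : 0 < (1 + t) ^ (K + 2)) by (apply pow_lt; lra).
  assert (H3 : exp (- t) <= INR (Factorial.fact (K + 2)) / (1 + t) ^ (K + 2)).
  { rewrite exp_Ropp. apply Rmult_le_reg_r with ((1+t)^(K+2) * exp t). pose proof (exp_pos t); nra.
    replace (/ exp t * ((1 + t) ^ (K + 2) * exp t)) with ((1 + t) ^ (K + 2)) by (field; pose proof (exp_pos t); lra).
    replace (INR (Factorial.fact (K + 2)) / (1 + t) ^ (K + 2) * ((1 + t) ^ (K + 2) * exp t)) with (INR (Factorial.fact (K + 2)) * exp t) by (field; lra).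
    lra. }
  rewrite pow_add in H3. 
  assert (0 <= Rpower t (s-1)) by (unfold Rpower; left; apply exp_pos).
  assert (0 < (1+t)^K) by (apply pow_lt; lra).
  eapply Rle_trans. apply Rmult_le_compat; try lra. left; apply exp_pos. apply H1. apply H3.
  right. field. split; nra.
Qed.

Lemma IG_bound s : 1 < s -> exists M, forall X, 0 <= X -> IG s X <= M.
Proof.
  intros Hs. destruct (nat_above (s - 1)) as [K HK].
  set (C := INR (Factorial.fact (K + 2))).
  assert (HC : 0 < C) by apply INR_fact_lt_0.
  exists C. intros X HX.
  assert (Hi : is_RInt (fun t => C / (1 + t) ^ 2) 0 X (minus ((fun t => - C / (1 + t)) X) ((fun t => - C / (1 + t)) 0))).
  { apply (is_RInt_derive (V := R_CompleteNormedModule) (fun t => - C / (1 + t)) (fun t => C / (1 + t) ^ 2) 0 X).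
    - intros x Hx. rewrite Rmin_left, Rmax_right in Hx by lra. auto_derive. lra. field. lra.
    - intros x Hx. rewrite Rmin_left, Rmax_right in Hx by lra.
      apply continuity_pt_filterlim. apply derivable_continuous_pt. eexists. apply is_derive_Reals. auto_derive. rewrite Rmult_1_r. apply Rmult_integral_contrapositive; split; lra. reflexivity. }
  unfold IG. eapply Rle_trans. apply RInt_le with (g := fun t => C / (1 + t) ^ 2). lra. apply gi_ex; auto.
  eexists; apply Hi. intros x Hx. unfold C. apply gi_bound; lra.
  rewrite (is_RInt_unique _ _ _ _ Hi). unfold minus, plus, opp; simpl.
  assert (0 < C / (1 + X)) by (apply Rdiv_lt_0_compat; lra). 
  replace (- C / (1 + X) + - (- C / (1 + 0))) with (C - C / (1 + X)) by (field; lra). lra.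
Qed.

Lemma is_Gamma_unique s g1 g2 : is_Gamma s g1 -> is_Gamma s g2 -> g1 = g2.
Proof.
  intros H1 H2. destruct (Req_dec g1 g2) as [|Hne]; auto. exfalso.
  set (e := Rabs (g1 - g2) / 2). assert (He : 0 < e) by (unfold e; pose proof (Rabs_pos_lt (g1 - g2)); lra).
  destruct (H1 e He) as [X1 HX1]. destruct (H2 e He) as [X2 HX2].
  destruct (HX1 (Rmax X1 X2) (Rmax_l _ _)) as [pr1 Hp1].
  destruct (HX2 (Rmax X1 X2) (Rmax_r _ _)) as [pr2 Hp2].
  rewrite (RiemannInt_P5 pr1 pr2) in Hp1.
  assert (Rabs (g1 - g2) <= Rabs (RiemannInt pr2 - g1) + Rabs (RiemannInt pr2 - g2)).
  { replace (g1 - g2) with (- (RiemannInt pr2 - g1) + (RiemannInt pr2 - g2)) by ring.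
    eapply Rle_trans. apply Rabs_triang. rewrite Rabs_Ropp. lra. }
  unfold e in *. lra.
Qed.

Lemma Gamma_spec s : 1 < s ->
  (forall X, 0 <= X -> IG s X <= Gamma s) /\
  (forall e, 0 < e -> exists X, 0 <= X /\ Gamma s - e < IG s X).
Proof.
  intros Hs.
  set (E := fun v => exists X, 0 <= X /\ v = IG s X).
  destruct (IG_bound s Hs) as [M HM].
  assert (Hb : bound E). { exists M. intros v [X [HX ->]]. apply HM; auto. }
  assert (Hne : exists v, E v). { exists (IG s 0). exists 0. split; auto; lra. }
  destruct (completeness E Hb Hne) as [L [HL1 HL2]].
  assert (C1 : forall X, 0 <= X -> IG s X <= L). { intros X HX. apply HL1. exists X; auto. }
  assert (C2 : forall e, 0 < e -> exists X, 0 <= X /\ L - e < IG s X).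
  { intros e He. apply NNPP. intros Hn.
    assert (L <= L - e); [|lra]. apply HL2. intros v [X [HX ->]].
    apply Rnot_lt_le. intros Hc. apply Hn. exists X; auto. }
  assert (HG : is_Gamma s L).
  { intros e He. destruct (C2 e He) as [X0 [HX0 HX0']]. exists X0. intros X HX.
    assert (Hex : ex_RInt (gamma_integrand s) 0 X) by (rewrite gi_eq; apply gi_ex; auto).
    exists (ex_RInt_Reals_0 _ _ _ Hex). rewrite <- RInt_Reals.
    assert (RInt (gamma_integrand s) 0 X = IG s X) by (unfold IG; rewrite gi_eq; reflexivity).
    rewrite H. pose proof (IG_mono s X0 X Hs ltac:(lra)). pose proof (C1 X ltac:(lra)).
    rewrite Rabs_left1 by lra. lra. }
  assert (Gamma s = L).
  { unfold Gamma. apply (is_Gamma_unique s). apply epsilon_spec. exists L; auto. auto. }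
  rewrite H. split; auto.
Qed.

Lemma Gamma_pos s : 1 < s -> 0 < Gamma s.
Proof.
  intros Hs. destruct (Gamma_spec s Hs) as [H1 _].
  assert (HI : 0 < IG s 2).
  { unfold IG. rewrite <- (RInt_Chasles (V := R_CompleteNormedModule) (gi s) 0 1 2) by (apply gi_ex; auto).
    assert (0 <= RInt (gi s) 0 1) by (apply RInt_ge_0; [lra|apply gi_ex; auto|intros; apply gi_ge0]).
    assert (exp (-2) <= RInt (gi s) 1 2).
    { replace (exp (-2)) with (RInt (fun _ => exp (-2)) 1 2).
      apply RInt_le. lra. apply ex_RInt_const. apply gi_ex; auto.
      intros x Hx. unfold gi. rewrite rp_pos by lra.
      assert (1 <= Rpower x (s - 1)). { unfold Rpower. assert (0 < ln x) by (rewrite <- ln_1; apply ln_increasing; lra). pose proof (exp_ineq1_le ((s-1) * ln x)). nra. }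
      assert (exp (-2) <= exp (- x)) by (left; apply exp_increasing; lra).
      assert (1*exp(-x) <= Rpower x (s-1) * exp(-x)) by (apply Rmult_le_compat_r; [left; apply exp_pos|lra]). lra.
      rewrite RInt_const. unfold scal; simpl; unfold mult; simpl. ring. }
    unfold plus; simpl. pose proof (exp_pos (-2)). lra. }
  specialize (H1 2 ltac:(lra)). lra.
Qed.

Lemma RInt_lin2 (f g : R -> R) c1 c2 a b : ex_RInt f a b -> ex_RInt g a b ->
  RInt (fun t => c1 * f t + c2 * g t) a b = c1 * RInt f a b + c2 * RInt g a b.
Proof.
  intros Hf Hg. apply is_RInt_unique.
  apply (is_RInt_plus (V := R_CompleteNormedModule) (fun t => c1 * f t) (fun t => c2 * g t)).
  apply (is_RInt_scal (V := R_CompleteNormedModule)), RInt_correct; auto.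
  apply (is_RInt_scal (V := R_CompleteNormedModule)), RInt_correct; auto.
Qed.

Lemma tail_small z : 1 < z -> forall e, 0 < e -> exists X0, 0 <= X0 /\
  forall X, X0 <= X -> rp X z * exp (- X) <= e.
Proof.
  intros Hz e He. destruct (nat_above z) as [K HK].
  set (C := INR (Factorial.fact (K + 1))). assert (HC : 0 < C) by apply INR_fact_lt_0.
  exists (C / e). split. apply Rdiv_le_0_compat; lra.
  intros X HX. assert (HX0 : 0 < X). { assert (0 < C / e) by (apply Rdiv_lt_0_compat; lra). lra. }
  rewrite rp_pos by lra.
  assert (H1 : Rpower X z <= (1 + X) ^ K).
  { eapply Rle_trans. apply (Rle_Rpower_l X (1+X) z); lra.
    rewrite <- Rpower_pow by lra. apply Rle_Rpower; lra. }
  pose proof (fact_exp (K + 1) X ltac:(lra)) as H2.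
  assert (Hp : 0 < (1 + X) ^ K) by (apply pow_lt; lra).
  assert (H3 : exp (- X) * (1 + X) ^ (K + 1) <= C).
  { rewrite exp_Ropp. apply Rmult_le_reg_r with (exp X). apply exp_pos.
    replace (/ exp X * (1 + X) ^ (K + 1) * exp X) with ((1 + X) ^ (K + 1)) by (field; pose proof (exp_pos X); lra).
    unfold C; lra. }
  rewrite pow_add, pow_1 in H3.
  assert (0 <= Rpower X z) by (unfold Rpower; left; apply exp_pos).
  pose proof (exp_pos (- X)).
  assert (Rpower X z * exp (- X) <= (1 + X) ^ K * exp (- X)) by (apply Rmult_le_compat_r; lra).
  assert ((1 + X) ^ K * exp (- X) * (1 + X) <= C) by nra.
  assert (C / e * e = C) by (field; lra).
  assert ((1 + X) ^ K * exp (- X) * (1 + X) >= (1 + X) ^ K * exp (- X) * (C / e)).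
  { apply Rle_ge, Rmult_le_compat_l. nra. lra. }
  assert ((1 + X) ^ K * exp (- X) <= e).
  { apply Rmult_le_reg_r with (C / e). apply Rdiv_lt_0_compat; lra. nra. }
  lra.
Qed.

Lemma IG_rec z X : 1 < z -> 0 <= X -> IG (z + 1) X = z * IG z X - rp X z * exp (- X).
Proof.
  intros Hz HX.
  assert (H : RInt (fun t => 1 * gi (z + 1) t + (- z) * gi z t) 0 X
              = (fun t => - rp t z * exp (- t)) X - (fun t => - rp t z * exp (- t)) 0).
  { apply (ftc (fun t => - rp t z * exp (- t)) (fun t => 1 * gi (z + 1) t + (- z) * gi z t) 0 X); auto.
    - intros t Ht. unfold gi. apply is_derive_Reals.
      replace (1 * (rp t (z + 1 - 1) * exp (- t)) + - z * (rp t (z - 1) * exp (- t)))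
        with (- (z * rp t (z - 1)) * exp (- t) + (- rp t z) * (- exp (- t)))
        by (replace (z + 1 - 1) with z by ring; ring).
      apply (derivable_pt_lim_mult (fun t => - rp t z) (fun t => exp (- t))).
      apply (derivable_pt_lim_opp (fun t => rp t z)). apply is_derive_Reals, rp_is_derive; lra.
      apply is_derive_Reals. auto_derive; auto. ring.
    - intros t Ht. apply cont_to_pt.
      apply (continuous_mult (fun t => - rp t z) (fun t => exp (- t))).
      apply (continuous_opp (fun t => rp t z)). apply rp_continuous; lra. apply exp_opp_cont.
    - intros t. apply (continuous_plus (fun t => 1 * gi (z + 1) t) (fun t => - z * gi z t)).
      apply (continuous_mult (fun _ => 1) (gi (z+1))). apply continuous_const. apply gi_cont; lra.
      apply (continuous_mult (fun _ => - z) (gi z)). apply continuous_const. apply gi_cont; lra. }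
  rewrite RInt_lin2 in H by (apply gi_ex; lra).
  simpl in H. rewrite (rp_npos 0) in H by lra. unfold IG. lra.
Qed.

Lemma Gamma_rec z : 1 < z -> Gamma (z + 1) = z * Gamma z.
Proof.
  intros Hz. assert (Hz1 : 1 < z + 1) by lra.
  destruct (Gamma_spec z Hz) as [A1 A2]. destruct (Gamma_spec (z + 1) Hz1) as [B1 B2].
  apply Rle_antisym.
  - apply le_epsilon. intros e He. destruct (B2 e He) as [X [HX HX']].
    rewrite IG_rec in HX' by lra. pose proof (A1 X HX).
    assert (0 <= rp X z * exp (- X)) by (apply Rmult_le_pos; [apply rp_ge0|left; apply exp_pos]).
    nra.
  - apply le_epsilon. intros e He.
    assert (He' : 0 < e / (z + 1)) by (apply Rdiv_lt_0_compat; lra).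
    destruct (A2 _ He') as [X1 [HX1 HX1']]. destruct (tail_small z Hz _ He') as [X2 [HX2 HX2']].
    set (X := Rmax X1 X2).
    pose proof (IG_mono z X1 X Hz ltac:(split; [auto|apply Rmax_l])).
    pose proof (HX2' X (Rmax_r _ _)). pose proof (B1 X ltac:(unfold X; apply Rle_trans with X1; [auto|apply Rmax_l])).
    assert (HX0 : 0 <= X) by (unfold X; apply Rle_trans with X1; [auto|apply Rmax_l]).
    rewrite IG_rec in H1 by lra.
    assert (z * (Gamma z - e / (z + 1)) < z * IG z X) by (apply Rmult_lt_compat_l; lra).
    assert (e = z * (e / (z + 1)) + e / (z + 1)) by (field; lra).
    lra.
Qed.

Lemma Gamma_shift_nat N k : 1 < N -> Gamma (N + INR k) <= (N + INR k) ^ k * Gamma N.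
Proof.
  intros HN. induction k as [|k IH].
  - simpl. rewrite Rplus_0_r. lra.
  - rewrite S_INR. replace (N + (INR k + 1)) with ((N + INR k) + 1) by ring.
    pose proof (pos_INR k).
    rewrite Gamma_rec by lra. simpl.
    pose proof (Gamma_pos N HN).
    assert ((N + INR k) ^ k <= (N + INR k + 1) ^ k) by (apply pow_incr; lra).
    assert (0 <= (N + INR k)^k) by (apply pow_le; lra).
    assert (Gamma (N + INR k) <= (N + INR k + 1) ^ k * Gamma N) by nra.
    assert (0 <= Gamma (N + INR k)) by (left; apply Gamma_pos; lra).
    nra.
Qed.

Lemma gi_exp s t : 0 < t -> gi s t = exp ((s - 1) * ln t - t).
Proof. intros Ht. unfold gi. rewrite rp_pos by lra. unfold Rpower. rewrite <- exp_plus. f_equal; ring. Qed.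

Lemma Gamma_G3 N x K : 1 < N -> 0 < x < INR K ->
  Gamma (N + x) <= rp (N + INR K) x * Gamma N.
Proof.
  intros HN Hx.
  assert (HK : 0 < INR K) by lra.
  set (th := x / INR K). assert (Hth : 0 < th < 1).
  { unfold th. split. apply Rdiv_lt_0_compat; lra. apply (Rmult_lt_reg_r (INR K)); auto. field_simplify; lra. }
  set (l := ln (N + INR K)).
  set (c1 := (1 - th) * exp (x * l)). set (c2 := th * exp ((x - INR K) * l)).
  assert (Hpt : forall t, gi (N + x) t <= c1 * gi N t + c2 * gi (N + INR K) t).
  { intros t. destruct (Rle_dec t 0).
    - unfold gi. rewrite !rp_npos by auto. lra.
    - rewrite !gi_exp by lra.
      set (A := (N - 1) * ln t - t). set (B := (N + INR K - 1) * ln t - t).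
      replace ((N + x - 1) * ln t - t) with ((1 - th) * (A + x * l) + (1 - (1 - th)) * (B + (x - INR K) * l)).
      2:{ assert (Ex : x = th * INR K) by (unfold th; field; lra). unfold A, B. rewrite Ex. ring. }
      eapply Rle_trans. apply exp_convex; lra.
      unfold c1, c2. rewrite !exp_plus. replace (1 - (1 - th)) with th by ring. unfold A, B. right. ring. }
  assert (Hc1 : 0 <= c1) by (unfold c1; pose proof (exp_pos (x * l)); nra).
  assert (Hc2 : 0 <= c2) by (unfold c2; pose proof (exp_pos ((x - INR K) * l)); nra).
  assert (HNK : 1 < N + INR K) by lra.
  assert (HI : forall X, 0 <= X -> IG (N + x) X <= c1 * Gamma N + c2 * Gamma (N + INR K)).
  { intros X HX. unfold IG. eapply Rle_trans.
    apply RInt_le with (g := fun t => c1 * gi N t + c2 * gi (N + INR K) t). auto. apply gi_ex; lra.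
    apply (ex_RInt_continuous (V := R_CompleteNormedModule)). intros.
    apply (continuous_plus (fun t => c1 * gi N t) (fun t => c2 * gi (N + INR K) t)).
    apply (continuous_mult (fun _ => c1) (gi N)). apply continuous_const. apply gi_cont; lra.
    apply (continuous_mult (fun _ => c2) (gi (N + INR K))). apply continuous_const. apply gi_cont; lra.
    intros; apply Hpt.
    rewrite RInt_lin2 by (apply gi_ex; lra).
    destruct (Gamma_spec N HN) as [G1 _]. destruct (Gamma_spec (N + INR K) HNK) as [G2 _].
    specialize (G1 X HX). specialize (G2 X HX). unfold IG in *. nra. }
  assert (HG : Gamma (N + x) <= c1 * Gamma N + c2 * Gamma (N + INR K)).
  { apply le_epsilon. intros e He. destruct (Gamma_spec (N + x) ltac:(lra)) as [_ G2].
    destruct (G2 e He) as [X [HX HX']]. specialize (HI X HX). lra. }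
  pose proof (Gamma_shift_nat N K HN).
  assert (Hpow : (N + INR K) ^ K = exp (INR K * l)).
  { rewrite <- Rpower_pow by lra. reflexivity. }
  assert (c1 * Gamma N + c2 * Gamma (N + INR K) <= c1 * Gamma N + c2 * ((N + INR K) ^ K * Gamma N)).
  { apply Rplus_le_compat_l, Rmult_le_compat_l; auto. }
  assert (c1 * Gamma N + c2 * ((N + INR K) ^ K * Gamma N) = rp (N + INR K) x * Gamma N).
  { rewrite Hpow. unfold c1, c2. rewrite rp_pos by lra. unfold Rpower. fold l.
    replace (th * exp ((x - INR K) * l) * (exp (INR K * l) * Gamma N))
      with (th * (exp ((x - INR K) * l) * exp (INR K * l)) * Gamma N) by ring.
    rewrite <- exp_plus. replace ((x - INR K) * l + INR K * l) with (x * l) by ring. ring. }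
  lra.
Qed.

Definition bi (x z s : R) : R := rp s (x - 1) * rp (1 - s) (z - 1).
Definition Bt (x z : R) : R := RInt (bi x z) 0 1.

Lemma bi_cont x z s : 1 < x -> 1 < z -> continuous (bi x z) s.
Proof.
  intros Hx Hz. unfold bi.
  apply (continuous_mult (fun s => rp s (x - 1)) (fun s => rp (1 - s) (z - 1))).
  apply rp_continuous; lra.
  apply (continuous_comp (fun s => 1 - s) (fun u => rp u (z - 1))).
  apply continuity_pt_filterlim. apply derivable_continuous_pt. eexists. apply is_derive_Reals. auto_derive; auto.
  apply rp_continuous; lra.
Qed.

Lemma bi_ex x z a b : 1 < x -> 1 < z -> ex_RInt (bi x z) a b.
Proof. intros. apply (ex_RInt_continuous (V := R_CompleteNormedModule)). intros; apply bi_cont; auto. Qed.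

Lemma bi_ge0 x z s : 0 <= bi x z s.
Proof. unfold bi. apply Rmult_le_pos; apply rp_ge0. Qed.

Lemma Bt_ge0 x z : 1 < x -> 1 < z -> 0 <= Bt x z.
Proof. intros. apply RInt_ge_0. lra. apply bi_ex; auto. intros; apply bi_ge0. Qed.

Lemma Bt_rec x z : 1 < x -> 1 < z -> (x + z) * Bt x (z + 1) = z * Bt x z.
Proof.
  intros Hx Hz.
  assert (E1 : Bt x z = 1 * Bt x (z + 1) + 1 * Bt (x + 1) z).
  { unfold Bt. rewrite <- RInt_lin2 by (apply bi_ex; lra).
    apply RInt_ext. intros s _. unfold bi. change (rp s (x - 1) * rp (1 - s) (z - 1) = 1 * (rp s (x - 1) * rp (1 - s) (z + 1 - 1)) + 1 * (rp s (x + 1 - 1) * rp (1 - s) (z - 1))).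
    replace (z + 1 - 1) with ((z - 1) + 1) by ring. replace (x + 1 - 1) with ((x - 1) + 1) by ring.
    rewrite !rp_S. ring. }
  assert (E2 : RInt (fun s => x * bi x (z + 1) s + (- z) * bi (x + 1) z s) 0 1
               = (fun s => rp s x * rp (1 - s) z) 1 - (fun s => rp s x * rp (1 - s) z) 0).
  { apply (ftc (fun s => rp s x * rp (1 - s) z)); [lra| | |].
    - intros s Hs. apply is_derive_Reals. unfold bi.
      replace (z + 1 - 1) with z by ring. replace (x + 1 - 1) with x by ring.
      replace (x * (rp s (x - 1) * rp (1 - s) z) + - z * (rp s x * rp (1 - s) (z - 1)))
        with ((x * rp s (x - 1)) * rp (1 - s) z + rp s x * (- (z * rp (1 - s) (z - 1)))) by ring.
      apply (derivable_pt_lim_mult (fun s => rp s x) (fun s => rp (1 - s) z)).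
      apply is_derive_Reals, rp_is_derive; lra.
      replace (- (z * rp (1 - s) (z - 1))) with ((z * rp (1 - s) (z - 1)) * (-1)) by ring.
      apply (derivable_pt_lim_comp (fun s => 1 - s) (fun u => rp u z)).
      apply is_derive_Reals. auto_derive; try ring; auto.
      apply is_derive_Reals, rp_is_derive; lra.
    - intros s Hs. apply cont_to_pt.
      apply (continuous_mult (fun s => rp s x) (fun s => rp (1 - s) z)).
      apply rp_continuous; lra.
      apply (continuous_comp (fun s => 1 - s) (fun u => rp u z)).
      apply continuity_pt_filterlim. apply derivable_continuous_pt. eexists. apply is_derive_Reals. auto_derive; auto.
      apply rp_continuous; lra.
    - intros s. apply (continuous_plus (fun s => x * bi x (z + 1) s) (fun s => - z * bi (x + 1) z s)).
      apply (continuous_mult (fun _ => x) (bi x (z + 1))). apply continuous_const. apply bi_cont; lra.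
      apply (continuous_mult (fun _ => - z) (bi (x + 1) z)). apply continuous_const. apply bi_cont; lra. }
  rewrite RInt_lin2 in E2 by (apply bi_ex; lra). simpl in E2.
  replace (1 - 1) with 0 in E2 by ring. rewrite !(rp_npos 0) in E2 by lra.
  fold (Bt x (z + 1)) in E2. fold (Bt (x + 1) z) in E2. nra.
Qed.

Lemma ln_1m s : 0 <= s < 1 -> ln (1 - s) <= - s.
Proof.
  intros Hs. rewrite <- (ln_exp (- s)). apply ln_le. lra. pose proof (exp_ineq1_le (- s)). lra.
Qed.

Lemma exp_le a b : a <= b -> exp a <= exp b.
Proof. intros H. destruct (Req_dec a b) as [->|H']. lra. left; apply exp_increasing; lra. Qed.

Lemma Bt_G x N : 1 < x -> 2 <= N -> Bt x N * rp (N - 1) x <= Gamma x.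
Proof.
  intros Hx HN.
  assert (E : Bt x N * rp (N - 1) x = RInt (fun s => rp (N - 1) x * bi x N s) 0 1).
  { assert (RInt (fun s => rp (N - 1) x * bi x N s) 0 1 = rp (N - 1) x * Bt x N).
    { apply is_RInt_unique. apply (is_RInt_scal (V := R_CompleteNormedModule) (bi x N) 0 1 (rp (N - 1) x)).
      apply RInt_correct, bi_ex; lra. }
    rewrite H; ring. }
  rewrite E. eapply Rle_trans.
  apply RInt_le with (g := fun s => scal (N - 1) (gi x ((N - 1) * s + 0))). lra.
  apply (ex_RInt_continuous (V := R_CompleteNormedModule)). intros.
  apply (continuous_mult (fun _ => rp (N - 1) x) (bi x N)). apply continuous_const. apply bi_cont; lra.
  apply (ex_RInt_continuous (V := R_CompleteNormedModule)). intros.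
  apply (continuous_mult (fun _ => N - 1) (fun s => gi x ((N - 1) * s + 0))). apply continuous_const.
  apply (continuous_comp (fun s => (N - 1) * s + 0) (gi x)).
  apply continuity_pt_filterlim. apply derivable_continuous_pt. eexists. apply is_derive_Reals. auto_derive; auto.
  apply gi_cont; lra.
  - intros s Hs. change (scal (N - 1) (gi x ((N - 1) * s + 0))) with ((N - 1) * gi x ((N - 1) * s + 0)).
    rewrite Rplus_0_r.
    unfold gi, bi. rewrite rp_mult by nra.
    assert (Hr : rp (1 - s) (N - 1) <= exp (- ((N - 1) * s))).
    { rewrite rp_pos by lra. unfold Rpower. apply exp_le.
      pose proof (ln_1m s ltac:(lra)). nra. }
    replace (rp (N - 1) x) with ((N - 1) * rp (N - 1) (x - 1)).
    2:{ rewrite <- (rp_S (N - 1) (x - 1)). f_equal; ring. }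
    pose proof (rp_ge0 (N - 1) (x - 1)). pose proof (rp_ge0 s (x - 1)). pose proof (rp_ge0 (1 - s) (N - 1)).
    assert (0 <= (N - 1) * rp (N - 1) (x - 1) * rp s (x - 1)) by (apply Rmult_le_pos; [apply Rmult_le_pos|]; lra).
    replace (exp (- ((N - 1) * s))) with (exp (- ((N - 1) * s))) by ring.
    assert ((N - 1) * rp (N - 1) (x - 1) * rp s (x - 1) * rp (1 - s) (N - 1) <=
            (N - 1) * rp (N - 1) (x - 1) * rp s (x - 1) * exp (- ((N - 1) * s))) by (apply Rmult_le_compat_l; auto).
    lra.
  - pose proof (RInt_comp_lin (V := R_CompleteNormedModule) (gi x) (N - 1) 0 0 1 ltac:(apply gi_ex; lra)) as Hc.
    eapply Rle_trans; [right; apply Hc|].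
    replace ((N - 1) * 0 + 0) with 0 by ring. replace ((N - 1) * 1 + 0) with (N - 1) by ring.
    destruct (Gamma_spec x Hx) as [G1 _]. apply G1. lra.
Qed.

Lemma beta_inv x y n : 1 < x -> 1 < y ->
  Bt x (y + INR n) * Gamma (x + (y + INR n)) * Gamma y = Bt x y * Gamma (x + y) * Gamma (y + INR n).
Proof.
  intros Hx Hy. induction n as [|n IH].
  - simpl. rewrite Rplus_0_r. ring.
  - rewrite S_INR. set (N := y + INR n) in *. pose proof (pos_INR n).
    replace (y + (INR n + 1)) with (N + 1) by (unfold N; ring).
    replace (x + (N + 1)) with ((x + N) + 1) by ring.
    rewrite Gamma_rec by (unfold N; lra). rewrite (Gamma_rec N) by (unfold N; lra).
    pose proof (Bt_rec x N Hx ltac:(unfold N; lra)).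
    transitivity (((x + N) * Bt x (N + 1)) * Gamma (x + N) * Gamma y). ring.
    rewrite H0. transitivity (N * (Bt x N * Gamma (x + N) * Gamma y)). ring.
    rewrite IH. ring.
Qed.

Lemma beta_gamma x y : 1 < x -> 1 < y -> Bt x y * Gamma (x + y) <= Gamma x * Gamma y.
Proof.
  intros Hx Hy.
  destruct (nat_above (x + 1)) as [K HK].
  set (V := Bt x y * Gamma (x + y)). set (C := Gamma x * Gamma y).
  assert (HC : 0 < C) by (unfold C; apply Rmult_lt_0_compat; apply Gamma_pos; lra).
  assert (Hb : forall n : nat, 1 <= INR n ->
    V <= C * exp (x * ((INR K + 1) / (y + INR n - 1)))).
  { intros n Hn. set (N := y + INR n).
    assert (HN : 2 <= N) by (unfold N; lra).
    pose proof (beta_inv x y n Hx Hy) as Hinv. fold N in Hinv.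
    assert (HGN : 0 < Gamma N) by (apply Gamma_pos; lra).
    assert (HGy : 0 < Gamma y) by (apply Gamma_pos; lra).
    pose proof (Gamma_G3 N x K ltac:(lra) ltac:(lra)) as G3.
    replace (N + x) with (x + N) in G3 by ring.
    pose proof (Bt_G x N Hx HN) as BG.
    pose proof (Bt_ge0 x N Hx ltac:(lra)) as B0.
    assert (Hr1 : 0 < rp (N - 1) x) by (apply rp_gt0; lra).
    assert (S1 : V * Gamma N <= Bt x N * (rp (N + INR K) x * Gamma N) * Gamma y).
    { unfold V. rewrite <- Hinv. apply Rmult_le_compat_r. lra.
      apply Rmult_le_compat_l; auto. }
    assert (S2 : V <= Bt x N * rp (N + INR K) x * Gamma y).
    { apply Rmult_le_reg_r with (Gamma N); auto. nra. }
    assert (S3 : Bt x N <= Gamma x / rp (N - 1) x).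
    { apply Rmult_le_reg_r with (rp (N - 1) x); auto. unfold Rdiv. rewrite Rmult_assoc, Rinv_l by lra. lra. }
    assert (Hr2 : 0 <= rp (N + INR K) x) by apply rp_ge0.
    assert (S4 : V <= C * (rp (N + INR K) x / rp (N - 1) x)).
    { eapply Rle_trans. apply S2. unfold C.
      assert (Bt x N * rp (N + INR K) x * Gamma y <= Gamma x / rp (N - 1) x * rp (N + INR K) x * Gamma y).
      { apply Rmult_le_compat_r. lra. apply Rmult_le_compat_r; auto. }
      eapply Rle_trans. apply H. right. field. lra. }
    eapply Rle_trans. apply S4. apply Rmult_le_compat_l. lra.
    rewrite !rp_pos by lra. unfold Rpower. unfold Rdiv at 1. rewrite <- exp_Ropp, <- exp_plus. apply exp_le.
    replace (x * ln (N + INR K) + - (x * ln (N - 1))) with (x * ln ((N + INR K) * / (N - 1))).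
    2:{ rewrite ln_mult, ln_Rinv by (try apply Rinv_0_lt_compat; lra). ring. }
    apply Rmult_le_compat_l. lra.
    assert (ln ((N + INR K) * / (N - 1)) <= (N + INR K) * / (N - 1) - 1).
    { pose proof (exp_ineq1_le (ln ((N + INR K) * / (N - 1)))).
      rewrite exp_ln in H by (apply Rmult_lt_0_compat; [lra|apply Rinv_0_lt_compat; lra]). lra. }
    replace ((N + INR K) * / (N - 1) - 1) with ((INR K + 1) / (N - 1)) in H by (field; lra).
    unfold N in *. auto. }
  apply NNPP. intros Hc. apply Rnot_le_lt in Hc.
  assert (Hq : 0 < ln (V / C)).
  { rewrite <- ln_1. apply ln_increasing. lra. apply (Rmult_lt_reg_r C); auto. unfold Rdiv. rewrite Rmult_assoc, Rinv_l; lra. }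
  destruct (nat_above (x * (INR K + 1) / ln (V / C) + 1)) as [n Hn].
  assert (Hpos : 0 < x * (INR K + 1) / ln (V / C)).
  { apply Rdiv_lt_0_compat; auto. pose proof (pos_INR K). nra. }
  specialize (Hb n ltac:(lra)).
  assert (HD : x * ((INR K + 1) / (y + INR n - 1)) < ln (V / C)).
  { assert (Hd : 0 < y + INR n - 1) by lra.
    set (A := x * (INR K + 1)) in *. set (L := ln (V / C)) in *. set (D := y + INR n - 1) in *.
    assert (HAL : A / L < D) by (unfold D; lra).
    assert (A < L * D). { apply (Rmult_lt_reg_r (/ L)). apply Rinv_0_lt_compat; auto.
      replace (L * D * / L) with D by (field; lra). auto. }
    replace (x * ((INR K + 1) / D)) with (A / D) by (unfold A; field; lra).
    apply (Rmult_lt_reg_r D); auto. replace (A / D * D) with A by (field; lra). lra. }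
  apply exp_increasing in HD. rewrite exp_ln in HD by (apply Rdiv_lt_0_compat; lra).
  assert (C * exp (x * ((INR K + 1) / (y + INR n - 1))) < C * (V / C)) by (apply Rmult_lt_compat_l; auto).
  replace (C * (V / C)) with V in H by (field; lra). lra.
Qed.

Lemma lam_opt X P Q p q : 0 < P -> 0 <= Q -> 1 < p -> 1 < q -> 1 / p + 1 / q = 1 ->
  (forall l, 0 < l -> X <= rp l p * P / p + rp l (- q) * Q / q) ->
  X <= rp P (1 / p) * rp Q (1 / q).
Proof.
  intros HP HQ Hp Hq Hpq H.
  assert (Hqe : q = p / (p - 1)).
  { assert (1 / q = 1 - 1 / p) by lra. assert (q = / (1 - 1 / p)).
    { rewrite <- H0. field. lra. } rewrite H1. field. split; lra. }
  destruct (Req_dec Q 0) as [HQ0|HQ0].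
  - subst Q. rewrite (rp_npos 0) by lra. rewrite Rmult_0_r.
    apply Rnot_lt_le. intros HX.
    set (mu := (ln (X * p / P) - 1) / p).
    specialize (H (exp mu) (exp_pos mu)). rewrite Rmult_0_r in H.
    rewrite rp_pos in H by apply exp_pos. unfold Rpower in H. rewrite ln_exp in H.
    assert (p * mu = ln (X * p / P) - 1) by (unfold mu; field; lra).
    assert (Hxp : 0 < X * p / P) by (apply Rdiv_lt_0_compat; [apply Rmult_lt_0_compat|]; lra).
    rewrite H0 in H. unfold Rminus in H. rewrite exp_plus, exp_ln in H by exact Hxp.
    assert (exp (- 1) < 1) by (rewrite <- exp_0; apply exp_increasing; lra).
    assert (X * p / P * exp (- 1) * P / p = X * exp (- 1)) by (field; lra).
    assert (X * exp (-1) < X) by nra. unfold Rdiv in *. rewrite ?Rmult_0_l, ?Rmult_0_r, ?Rplus_0_r in H. replace (- (1)) with (-1) in H by ring. lra.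
  - assert (HQp : 0 < Q) by lra.
    set (a := ln P). set (b := ln Q).
    specialize (H (exp ((b - a) / (p + q))) (exp_pos _)).
    rewrite !rp_pos in H by apply exp_pos. unfold Rpower in H. rewrite !ln_exp in H.
    rewrite !rp_pos by lra. unfold Rpower. fold a b.
    replace P with (exp a) in H at 1 by (unfold a; apply exp_ln; lra).
    replace Q with (exp b) in H at 1 by (unfold b; apply exp_ln; lra).
    unfold Rdiv in H. rewrite (Rmult_assoc (exp (p * _))), (Rmult_assoc (exp (- q * _))) in H.
    rewrite <- (Rmult_assoc (exp (p * _))), <- (Rmult_assoc (exp (- q * _))) in H.
    rewrite <- !exp_plus in H.
    assert (Hpq2 : p + q = p * q).
    { apply (Rmult_eq_reg_r (/ (p * q))). rewrite Rinv_r by nra. rewrite <- Hpq. field. lra.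
      apply Rinv_neq_0_compat; nra. }
    rewrite Hpq2 in H.
    assert (E1 : 1 / p = 1 - 1 / q) by lra.
    replace (p * ((b - a) * / (p * q)) + a) with (1 / p * a + 1 / q * b) in H by (rewrite E1; field; lra).
    replace (- q * ((b - a) * / (p * q)) + b) with (1 / p * a + 1 / q * b) in H by (replace (1 / q) with (1 - 1 / p) by lra; field; lra).
    rewrite <- exp_plus. rewrite <- Rmult_plus_distr_l in H.
    assert (/ p + / q = 1) by (rewrite <- Hpq; field; lra).
    rewrite H0, Rmult_1_r in H. auto.
Qed.

Lemma half_bound (phi dphi Ws w Gs Hs g : R -> R) (h4 p q : R) :
  1 < p -> 1 < q -> 1 / p + 1 / q = 1 -> 0 <= h4 ->
  (forall s, 0 < s < 1 -> is_derive phi s (dphi s)) ->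
  (forall s, 0 <= s <= 1 -> continuity_pt phi s) ->
  (forall s, 0 < s < 1 -> Rabs (dphi s) <= h4 * (s * (1 - s) ^ 2) * g s) ->
  (forall s, 0 < s < 1 -> 0 <= g s) ->
  (forall s, 0 < s < 1 -> rp (g s) q <= Hs s) ->
  (forall s, 0 < s < 1 -> is_derive Gs s (Hs s)) ->
  (forall s, 0 <= s <= 1 -> continuity_pt Gs s) ->
  (forall s, 0 < s < 1 -> is_derive Ws s (rp s p * rp (1 - s) (2 * p))) ->
  (forall s, 0 <= s <= 1 -> continuity_pt Ws s) ->
  0 < Ws 1 - Ws 0 ->
  Rabs (phi 1 - phi 0) <= h4 * rp (Ws 1 - Ws 0) (1 / p) * rp (Gs 1 - Gs 0) (1 / q).
Proof.
  intros Hp Hq Hpq Hh4 Dphi Cphi Bphi Hg HgH DG CG DW CW HP.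
  assert (HQ : Gs 0 <= Gs 1).
  { apply (mono Gs Hs 0 1); auto. lra. intros s Hs'. eapply Rle_trans. apply rp_ge0. auto. }
  assert (Hlam : forall l, 0 < l -> Rabs (phi 1 - phi 0) <=
     h4 * (rp l p * (Ws 1 - Ws 0) / p + rp l (- q) * (Gs 1 - Gs 0) / q)).
  { intros l Hl.
    set (Psi := fun s => h4 * (rp l p * Ws s / p + rp l (- q) * Gs s / q)).
    set (dPsi := fun s => h4 * (rp l p * (rp s p * rp (1 - s) (2 * p)) / p + rp l (- q) * Hs s / q)).
    assert (DPsi : forall s, 0 < s < 1 -> is_derive Psi s (dPsi s)).
    { intros s Hs'. unfold Psi, dPsi. apply is_derive_Reals.
      apply (derivable_pt_lim_scal (fun s => rp l p * Ws s / p + rp l (- q) * Gs s / q)).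
      apply (derivable_pt_lim_plus (fun s => rp l p * Ws s / p) (fun s => rp l (- q) * Gs s / q)).
      - unfold Rdiv. replace (rp l p * (rp s p * rp (1 - s) (2 * p)) * / p) with ((rp l p / p) * (rp s p * rp (1 - s) (2 * p))) by (field; lra).
        apply (derivable_pt_lim_ext (fun s => (rp l p / p) * Ws s)). intros; field; lra.
        apply derivable_pt_lim_scal. apply is_derive_Reals; auto.
      - unfold Rdiv. replace (rp l (- q) * Hs s * / q) with ((rp l (- q) / q) * Hs s) by (field; lra).
        apply (derivable_pt_lim_ext (fun s => (rp l (- q) / q) * Gs s)). intros; field; lra.
        apply derivable_pt_lim_scal. apply is_derive_Reals; auto. }
    assert (CPsi : forall s, 0 <= s <= 1 -> continuity_pt Psi s).
    { intros s Hs'. unfold Psi. apply continuity_pt_scal. apply continuity_pt_plus.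
      unfold Rdiv. apply continuity_pt_mult. apply continuity_pt_scal. auto. apply continuity_pt_const. intros u v; auto.
      apply continuity_pt_mult. apply continuity_pt_scal. auto. apply continuity_pt_const. intros u v; auto. }
    assert (Key : forall s, 0 < s < 1 -> Rabs (dphi s) <= dPsi s).
    { intros s Hs'. eapply Rle_trans. apply Bphi; auto. unfold dPsi.
      rewrite Rmult_assoc. apply Rmult_le_compat_l; auto.
      assert (Hy := young (l * (s * (1 - s) ^ 2)) (g s / l) p q).
      assert (E1 : l * (s * (1 - s) ^ 2) * (g s / l) = s * (1 - s) ^ 2 * g s) by (field; lra).
      rewrite E1 in Hy.
      assert (E2 : rp (l * (s * (1 - s) ^ 2)) p = rp l p * (rp s p * rp (1 - s) (2 * p))).
      { assert (Hs2 : 0 <= s * (1 - s) ^ 2) by (apply Rmult_le_pos; [lra|apply pow_le; lra]).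
        rewrite rp_mult by (try lra; auto). rewrite rp_mult by (try lra; apply pow_le; lra). simpl. rewrite Rmult_1_r, rp_mult by lra.
        replace (2 * p) with (p + p) by ring. rewrite rp_plus. ring. }
      assert (E3 : rp (g s / l) q = rp l (- q) * rp (g s) q).
      { unfold Rdiv. rewrite rp_mult. rewrite (rp_pos (/ l)) by (apply Rinv_0_lt_compat; auto).
        rewrite (rp_pos l (- q)) by auto. unfold Rpower. rewrite ln_Rinv by auto. replace (q * - ln l) with (- q * ln l) by ring. ring.
        apply Hg; auto. left; apply Rinv_0_lt_compat; auto. }
      rewrite E2, E3 in Hy.
      assert (rp l (- q) * rp (g s) q <= rp l (- q) * Hs s) by (apply Rmult_le_compat_l; [apply rp_ge0|auto]).
      assert (0 <= s * (1 - s) ^ 2) by (apply Rmult_le_pos; [lra|apply pow_le; lra]).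
      assert (0 <= g s / l) by (apply Rdiv_le_0_compat; auto; apply Hg; auto).
      specialize (Hy ltac:(nra) ltac:(auto) ltac:(lra) ltac:(lra) Hpq).
      unfold Rdiv in *. assert (0 < / q) by (apply Rinv_0_lt_compat; lra). nra. }
    assert (M1 : (fun s => Psi s - phi s) 0 <= (fun s => Psi s - phi s) 1).
    { apply (mono (fun s => Psi s - phi s) (fun s => dPsi s - dphi s) 0 1). lra.
      intros s Hs'. apply is_derive_Reals. apply derivable_pt_lim_minus; apply is_derive_Reals; auto.
      intros s Hs'. apply continuity_pt_minus; auto.
      intros s Hs'. pose proof (Key s Hs'). pose proof (Rle_abs (dphi s)). lra. }
    assert (M2 : (fun s => Psi s + phi s) 0 <= (fun s => Psi s + phi s) 1).
    { apply (mono (fun s => Psi s + phi s) (fun s => dPsi s + dphi s) 0 1). lra.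
      intros s Hs'. apply is_derive_Reals. apply derivable_pt_lim_plus; apply is_derive_Reals; auto.
      intros s Hs'. apply continuity_pt_plus; auto.
      intros s Hs'. pose proof (Key s Hs'). pose proof (Rle_abs (- dphi s)) as Hab. rewrite Rabs_Ropp in Hab. lra. }
    simpl in M1, M2. unfold Psi in M1, M2.
    apply Rabs_le. split.
    - replace (h4 * (rp l p * (Ws 1 - Ws 0) / p + rp l (- q) * (Gs 1 - Gs 0) / q)) with
        (h4 * (rp l p * Ws 1 / p + rp l (- q) * Gs 1 / q) - h4 * (rp l p * Ws 0 / p + rp l (- q) * Gs 0 / q)) by (field; lra).
      lra.
    - replace (h4 * (rp l p * (Ws 1 - Ws 0) / p + rp l (- q) * (Gs 1 - Gs 0) / q)) with
        (h4 * (rp l p * Ws 1 / p + rp l (- q) * Gs 1 / q) - h4 * (rp l p * Ws 0 / p + rp l (- q) * Gs 0 / q)) by (field; lra).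
      lra. }
  destruct (Req_dec h4 0) as [Hz|Hz].
  - specialize (Hlam 1 Rlt_0_1). rewrite Hz in *. lra.
  - assert (Hh : 0 < h4) by lra.
    assert (Rabs (phi 1 - phi 0) / h4 <= rp (Ws 1 - Ws 0) (1 / p) * rp (Gs 1 - Gs 0) (1 / q)).
    { apply lam_opt; auto. lra. intros l Hl. specialize (Hlam l Hl).
      apply (Rmult_le_reg_l h4); auto. replace (h4 * (Rabs (phi 1 - phi 0) / h4)) with (Rabs (phi 1 - phi 0)) by (field; lra). auto. }
    apply (Rmult_le_compat_l h4) in H; [|lra].
    replace (h4 * (Rabs (phi 1 - phi 0) / h4)) with (Rabs (phi 1 - phi 0)) in H by (field; lra). lra.
Qed.

Definition K0 s := - (s - 2 * s ^ 2 + s ^ 3) / 6.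
Definition K1 s := - (1 - 4 * s + 3 * s ^ 2) / 6.
Definition K2 s := - (-4 + 6 * s) / 6.

Definition phi (f f1 f2 F : R -> R) (c h s : R) :=
  h ^ 3 * K0 s * f2 (c + s * h) - h ^ 2 * K1 s * f1 (c + s * h) + h * K2 s * f (c + s * h) + F (c + s * h).

Lemma phi_deriv (f f1 f2 f3 F : R -> R) c h s :
  is_derive f (c + s * h) (f1 (c + s * h)) ->
  is_derive f1 (c + s * h) (f2 (c + s * h)) ->
  is_derive f2 (c + s * h) (f3 (c + s * h)) ->
  is_derive F (c + s * h) (f (c + s * h)) ->
  is_derive (phi f f1 f2 F c h) s (h ^ 4 * K0 s * f3 (c + s * h)).
Proof.
  intros D0 D1 D2 DF. unfold phi, K0, K1, K2.
  auto_derive.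
  - repeat split; eexists; eauto.
  - replace (Derive (fun x : R => f x) (c + s * h)) with (f1 (c + s * h)) by (symmetry; apply is_derive_unique; exact D0).
    replace (Derive (fun x : R => f1 x) (c + s * h)) with (f2 (c + s * h)) by (symmetry; apply is_derive_unique; exact D1).
    replace (Derive (fun x : R => f2 x) (c + s * h)) with (f3 (c + s * h)) by (symmetry; apply is_derive_unique; exact D2).
    replace (Derive (fun x : R => F x) (c + s * h)) with (f (c + s * h)) by (symmetry; apply is_derive_unique; exact DF).
    field.
Qed.

Lemma phi_diff (f f1 f2 F : R -> R) c h :
  phi f f1 f2 F c h 1 - phi f f1 f2 F c h 0 =
  F (c + h) - F c - h / 3 * f (c + h) - 2 * h / 3 * f c - h ^ 2 / 6 * f1 c.
Proof.
  unfold phi, K0, K1, K2. replace (c + 1 * h) with (c + h) by ring. replace (c + 0 * h) with c by ring. field.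
Qed.

Lemma powR_pos u y : 0 < u -> powR u y = rp u y.
Proof. intros H. unfold powR, rp. destruct (Req_EM_T u 0); destruct (Rle_dec u 0); try lra. Qed.

Lemma Bt_pos x z : 1 < x -> 1 < z -> 0 < Bt x z.
Proof.
  intros Hx Hz. apply RInt_gt_0. lra.
  intros s Hs. unfold bi. apply Rmult_lt_0_compat; apply rp_gt0; lra.
  intros; apply bi_cont; auto.
Qed.

Lemma side (bstar : R) (f f1 f2 f3 F : R -> R) (a b alpha m p q c h : R) (tf Gs : R -> R) :
  1 < p -> 1 < q -> 1 / p + 1 / q = 1 -> 0 <= alpha <= 1 -> 0 < m <= 1 ->
  0 <= a <= bstar -> 0 <= b <= bstar ->
  (forall x, 0 <= x <= bstar -> is_derive f x (f1 x) /\ is_derive f1 x (f2 x) /\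
                                 is_derive f2 x (f3 x) /\ is_derive F x (f x)) ->
  (forall s, 0 <= s <= 1 -> 0 <= c + s * h <= bstar) ->
  (forall s, 0 < s < 1 -> c + s * h = tf s * a + m * (1 - tf s) * b /\ 0 < tf s <= 1) ->
  alpha_m_convex alpha m bstar (fun x => powR (Rabs (f3 x)) q) ->
  (forall s, 0 < s < 1 -> is_derive Gs s (rp (tf s) alpha * powR (Rabs (f3 a)) q
                                           + m * (1 - rp (tf s) alpha) * powR (Rabs (f3 b)) q)) ->
  (forall s, 0 <= s <= 1 -> continuity_pt Gs s) ->
  Rabs (phi f f1 f2 F c h 1 - phi f f1 f2 F c h 0)
    <= h ^ 4 / 6 * rp (Bt (p + 1) (2 * p + 1)) (1 / p) * rp (Gs 1 - Gs 0) (1 / q).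
Proof.
  intros Hp Hq Hpq Hal Hm Ha Hb HD Hdom Ht Hconv DG CG.
  set (W := fun s => RInt (bi (p + 1) (2 * p + 1)) 0 s).
  assert (HB : Bt (p + 1) (2 * p + 1) = W 1 - W 0).
  { unfold W, Bt. rewrite RInt_point. unfold zero; simpl. rewrite Rminus_0_r. reflexivity. }
  rewrite HB.
  assert (Hcb : forall s, continuous (bi (p + 1) (2 * p + 1)) s) by (intros; apply bi_cont; lra).
  apply (half_bound (phi f f1 f2 F c h) (fun s => h ^ 4 * K0 s * f3 (c + s * h)) W (fun _ => 0) Gs
           (fun s => rp (tf s) alpha * powR (Rabs (f3 a)) q + m * (1 - rp (tf s) alpha) * powR (Rabs (f3 b)) q)
           (fun s => Rabs (f3 (c + s * h))) (h ^ 4 / 6) p q); auto.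
  - assert (0 <= h ^ 4) by (replace (h ^ 4) with ((h ^ 2) ^ 2) by ring; apply pow2_ge_0).
    lra.
  - intros s Hs. destruct (HD (c + s * h) (Hdom s ltac:(lra))) as [D0 [D1 [D2 DF]]].
    apply phi_deriv; auto.
  - intros s Hs. destruct (HD (c + s * h) (Hdom s Hs)) as [D0 [D1 [D2 DF]]].
    apply derivable_continuous_pt. eexists. apply is_derive_Reals. apply phi_deriv; eauto.
  - intros s Hs. rewrite !Rabs_mult. unfold K0.
    assert (Rabs (h ^ 4) = h ^ 4) by (apply Rabs_pos_eq; replace (h ^ 4) with ((h ^ 2) ^ 2) by ring; apply pow2_ge_0).
    assert (Rabs (- (s - 2 * s ^ 2 + s ^ 3) / 6) = s * (1 - s) ^ 2 / 6).
    { rewrite Rabs_left1. field. assert (0 <= s * (1 - s) ^ 2) by (apply Rmult_le_pos; [lra|apply pow_le; lra]).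
      replace (- (s - 2 * s ^ 2 + s ^ 3) / 6) with (- (s * (1 - s) ^ 2) / 6) by field. lra. }
    rewrite H, H0. right. field.
  - intros; apply Rabs_pos.
  - intros s Hs. destruct (Ht s Hs) as [Hx Htt].
    pose proof (Hconv a b (tf s) Ha Hb ltac:(lra)) as Hc. simpl in Hc.
    rewrite <- Hx in Hc. rewrite !(powR_pos (tf s)) in Hc by lra.
    rewrite (rp_powR _ q) in Hc by (try apply Rabs_pos; lra). auto.
  - intros s Hs. unfold W.
    replace (rp s p * rp (1 - s) (2 * p)) with (bi (p + 1) (2 * p + 1) s).
    apply RInt_is_derive; auto.
    unfold bi. f_equal; f_equal; ring.
  - intros s Hs. unfold W. apply RInt_cont; auto.
  - rewrite <- HB. apply Bt_pos; lra.
Qed.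

Definition Gk (A B m alpha k s : R) :=
  m * B * s + (A - m * B) / (k * (alpha + 1)) * rp (1 / 2 + k * s) (alpha + 1).

Lemma Gk_deriv A B m alpha k s : 0 <= alpha -> k <> 0 -> 0 < 1 / 2 + k * s ->
  is_derive (Gk A B m alpha k) s (rp (1 / 2 + k * s) alpha * A + m * (1 - rp (1 / 2 + k * s) alpha) * B).
Proof.
  intros Hal Hk Hs. unfold Gk. apply is_derive_Reals.
  replace (rp (1 / 2 + k * s) alpha * A + m * (1 - rp (1 / 2 + k * s) alpha) * B)
    with (m * B * 1 + (A - m * B) / (k * (alpha + 1)) * (((alpha + 1) * rp (1 / 2 + k * s) (alpha + 1 - 1)) * k)).
  2:{ replace (alpha + 1 - 1) with alpha by ring. field. split; lra. }
  apply derivable_pt_lim_plus.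
  - apply derivable_pt_lim_scal. apply derivable_pt_lim_id.
  - apply derivable_pt_lim_scal.
    apply (derivable_pt_lim_comp (fun s => 1 / 2 + k * s) (fun u => rp u (alpha + 1))).
    apply is_derive_Reals. auto_derive; auto. ring.
    apply is_derive_Reals, rp_is_derive; auto.
Qed.

Lemma Gk_cont A B m alpha k s : 0 <= alpha -> continuity_pt (Gk A B m alpha k) s.
Proof.
  intros Hal. unfold Gk. apply cont_to_pt.
  apply (continuous_plus (fun s => m * B * s) (fun s => (A - m * B) / (k * (alpha + 1)) * rp (1 / 2 + k * s) (alpha + 1))).
  apply continuity_pt_filterlim. apply derivable_continuous_pt. eexists. apply is_derive_Reals. auto_derive; auto.
  apply (continuous_mult (fun _ => (A - m * B) / (k * (alpha + 1))) (fun s => rp (1 / 2 + k * s) (alpha + 1))).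
  apply continuous_const.
  apply (continuous_comp (fun s => 1 / 2 + k * s) (fun u => rp u (alpha + 1))).
  apply continuity_pt_filterlim. apply derivable_continuous_pt. eexists. apply is_derive_Reals. auto_derive; auto.
  apply rp_continuous; lra.
Qed.

Lemma rp_half alpha : rp (1 / 2) (alpha + 1) = / (2 * Rpower 2 alpha).
Proof.
  rewrite rp_pos by lra.
  replace (2 * Rpower 2 alpha) with (exp ((alpha + 1) * ln 2)).
  2:{ unfold Rpower. rewrite Rmult_plus_distr_r, Rmult_1_l, exp_plus, exp_ln by lra. ring. }
  unfold Rpower. replace (1 / 2) with (/ 2) by field.
  rewrite ln_Rinv by lra. rewrite <- exp_Ropp. f_equal. ring.
Qed.

Lemma Gk_right A B m alpha : 0 <= alpha ->
  Gk A B m alpha (- (1 / 2)) 1 - Gk A B m alpha (- (1 / 2)) 0 =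
  (A + m * (Rpower 2 alpha * (1 + alpha) - 1) * B) / (Rpower 2 alpha * (1 + alpha)).
Proof.
  intros Hal. unfold Gk. replace (1 / 2 + - (1 / 2) * 1) with 0 by ring.
  replace (1 / 2 + - (1 / 2) * 0) with (1 / 2) by ring.
  rewrite (rp_npos 0) by lra. rewrite rp_half.
  assert (0 < Rpower 2 alpha) by (unfold Rpower; apply exp_pos).
  field. split; lra.
Qed.

Lemma Gk_left A B m alpha : 0 <= alpha ->
  Gk A B m alpha (1 / 2) 1 - Gk A B m alpha (1 / 2) 0 =
  ((Rpower 2 (1 + alpha) - 1) * A + m * (Rpower 2 alpha * (1 + alpha) - (Rpower 2 (1 + alpha) - 1)) * B)
    / (Rpower 2 alpha * (1 + alpha)).
Proof.
  intros Hal. unfold Gk. replace (1 / 2 + 1 / 2 * 1) with 1 by lra.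
  replace (1 / 2 + 1 / 2 * 0) with (1 / 2) by lra.
  replace (rp 1 (alpha + 1)) with 1.
  2:{ rewrite (rp_pos 1) by lra. unfold Rpower. rewrite ln_1, Rmult_0_r, exp_0. auto. }
  rewrite rp_half.
  replace (Rpower 2 (1 + alpha)) with (2 * Rpower 2 alpha).
  2:{ rewrite Rpower_plus, Rpower_1 by lra. ring. }
  assert (0 < Rpower 2 alpha) by (unfold Rpower; apply exp_pos).
  field. split; lra.
Qed.

Lemma powR_ge0 x y : 0 <= powR x y.
Proof.
  unfold powR. destruct (Req_EM_T x 0); [destruct (Req_EM_T y 0); lra|].
  unfold Rpower; left; apply exp_pos.
Qed.

Lemma conv_bound l x y B : 0 <= l <= 1 -> 0 <= x <= B -> 0 <= y <= B -> 0 <= l * x + (1 - l) * y <= B.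
Proof. intros. split; nra. Qed.

Theorem theorem4 (bstar : R) (f f1 f2 f3 : R -> R) (a b alpha m p q : R) :
  0 < bstar ->
  (exists c d, c < 0 /\ bstar < d /\
     forall x, c < x < d ->
       derivable_pt_lim f x (f1 x) /\
       derivable_pt_lim f1 x (f2 x) /\
       derivable_pt_lim f2 x (f3 x)) ->
  0 <= a <= bstar -> 0 <= b <= bstar -> a < b ->
  0 <= alpha <= 1 -> 0 < m <= 1 ->
  1 < q -> 1 / p + 1 / q = 1 ->
  alpha_m_convex alpha m bstar (fun x => powR (Rabs (f3 x)) q) ->
  forall pr : Riemann_integrable f a (m * b),
    Rabs (RiemannInt pr
          - (m * b - a) / 6 * (f a + 4 * f ((a + m * b) / 2) + f (m * b)))
    <= (m * b - a) ^ 4 / 96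
       * powR (Gamma (2 * p + 1) * Gamma (p + 1) / Gamma (3 * p + 2)) (1 / p)
       * ( powR ((powR (Rabs (f3 a)) q
                  + m * (Rpower 2 alpha * (1 + alpha) - 1) * powR (Rabs (f3 b)) q)
                 / (Rpower 2 alpha * (1 + alpha))) (1 / q)
         + powR (((Rpower 2 (1 + alpha) - 1) * powR (Rabs (f3 a)) q
                  + m * (Rpower 2 alpha * (1 + alpha) - (Rpower 2 (1 + alpha) - 1))
                      * powR (Rabs (f3 b)) q)
                 / (Rpower 2 alpha * (1 + alpha))) (1 / q) ).
Proof.
  intros Hbs [c0 [d0 [Hc0 [Hd0 HD0]]]] Ha Hb Hab Hal Hm Hq Hpq Hconv pr.
  assert (Hp : 1 < p).
  { assert (H1 : 0 < 1 / q < 1).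
    { split. apply Rdiv_lt_0_compat; lra. apply (Rmult_lt_reg_r q); [lra|]. field_simplify; lra. }
    assert (H2 : 0 < 1 / p < 1) by lra.
    destruct (Rlt_le_dec 0 p) as [Hp0|Hp0].
    - apply (Rmult_lt_reg_r (1 / p)). lra. replace (p * (1 / p)) with 1 by (field; lra). lra.
    - destruct (Req_dec p 0) as [->|Hpn]. unfold Rdiv in H2. rewrite Rinv_0 in H2. lra.
      assert (1 / p < 0) by (unfold Rdiv; rewrite Rmult_1_l; apply Rinv_lt_0_compat; lra). lra. }
  set (v := m * b) in *.
  assert (Hv : 0 <= v <= bstar) by (unfold v; split; nra).
  assert (Hcont : forall x, c0 < x < d0 -> continuous f x).
  { intros x Hx. apply continuity_pt_filterlim, derivable_continuous_pt. exists (f1 x). apply HD0; auto. }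
  set (F := fun x => RInt f 0 x).
  assert (Hex : forall y z, c0 < y < d0 -> c0 < z < d0 -> ex_RInt f y z).
  { intros y z Hy Hz. apply (ex_RInt_continuous (V := R_CompleteNormedModule)). intros w Hw. apply Hcont.
    split. eapply Rlt_le_trans; [|apply Hw]. apply Rmin_glb_lt; lra.
    eapply Rle_lt_trans; [apply Hw|]. apply Rmax_lub_lt; lra. }
  assert (DF : forall x, c0 < x < d0 -> is_derive F x (f x)).
  { intros x Hx.
    assert (Hd : 0 < Rmin (x - c0) (d0 - x)) by (apply Rmin_glb_lt; lra).
    apply (is_derive_RInt (V := R_CompleteNormedModule) f F 0 x).
    - exists (mkposreal _ Hd). intros y Hy. unfold ball in Hy; simpl in Hy.
      unfold AbsRing_ball, abs, minus, plus, opp in Hy; simpl in Hy. apply Rabs_def2 in Hy.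
      pose proof (Rmin_l (x - c0) (d0 - x)). pose proof (Rmin_r (x - c0) (d0 - x)).
      apply RInt_correct, Hex; lra.
    - apply Hcont; auto. }
  assert (HD : forall x, 0 <= x <= bstar -> is_derive f x (f1 x) /\ is_derive f1 x (f2 x) /\
                                 is_derive f2 x (f3 x) /\ is_derive F x (f x)).
  { intros x Hx. destruct (HD0 x ltac:(lra)) as [D0 [D1 D2]].
    split; [apply is_derive_Reals; auto|split; [apply is_derive_Reals; auto|split; [apply is_derive_Reals; auto|apply DF; lra]]]. }
  assert (HI : RiemannInt pr = F v - F a).
  { rewrite <- RInt_Reals. unfold F.
    assert (HC : RInt f 0 a + RInt f a v = RInt f 0 v) by (apply (RInt_Chasles (V := R_CompleteNormedModule) f 0 a v); apply Hex; lra).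
    match goal with |- ?x = ?y => change (@eq R x y) end. lra. }
  set (h := (v - a) / 2). set (c := (a + v) / 2).
  assert (Eq : RiemannInt pr - (v - a) / 6 * (f a + 4 * f c + f v)
           = (phi f f1 f2 F c h 1 - phi f f1 f2 F c h 0) - (phi f f1 f2 F c (- h) 1 - phi f f1 f2 F c (- h) 0)).
  { rewrite !phi_diff. replace (c + h) with v by (unfold c, h; field). replace (c + - h) with a by (unfold c, h; field).
    fold c. rewrite HI. unfold h. field. }
  rewrite Eq.
  set (A := powR (Rabs (f3 a)) q). set (B := powR (Rabs (f3 b)) q).
  assert (R1 := side bstar f f1 f2 f3 F a b alpha m p q c h (fun s => 1 / 2 + - (1 / 2) * s) (Gk A B m alpha (- (1 / 2)))
                  Hp Hq Hpq Hal Hm Ha Hb HD).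
  assert (R2 := side bstar f f1 f2 f3 F a b alpha m p q c (- h) (fun s => 1 / 2 + (1 / 2) * s) (Gk A B m alpha (1 / 2))
                  Hp Hq Hpq Hal Hm Ha Hb HD).
  rewrite Gk_right in R1 by lra. rewrite Gk_left in R2 by lra.
  specialize (R1 ltac:(intros s Hs; unfold c, h; replace ((a + v) / 2 + s * ((v - a) / 2)) with ((1/2 - s/2) * a + (1 - (1/2 - s/2)) * v) by field; apply conv_bound; lra)).
  specialize (R2 ltac:(intros s Hs; unfold c, h; replace ((a + v) / 2 + s * - ((v - a) / 2)) with ((1/2 + s/2) * a + (1 - (1/2 + s/2)) * v) by field; apply conv_bound; lra)).
  specialize (R1 ltac:(intros s Hs; split; [unfold c, h, v; field|lra])).
  specialize (R2 ltac:(intros s Hs; split; [unfold c, h, v; field|lra])).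
  specialize (R1 Hconv). specialize (R2 Hconv).
  specialize (R1 ltac:(intros s Hs; apply Gk_deriv; lra)).
  specialize (R2 ltac:(intros s Hs; apply Gk_deriv; lra)).
  specialize (R1 ltac:(intros s Hs; apply Gk_cont; lra)).
  specialize (R2 ltac:(intros s Hs; apply Gk_cont; lra)).
  assert (HA : 0 <= A) by (unfold A; apply powR_ge0).
  assert (HB' : 0 <= B) by (unfold B; apply powR_ge0).
  assert (H2a : 1 <= Rpower 2 alpha) by (rewrite <- (Rpower_O 2) by lra; apply Rle_Rpower; lra).
  assert (H2b : Rpower 2 alpha <= 1 + alpha).
  { unfold Rpower. replace (alpha * ln 2) with (alpha * ln 2 + (1 - alpha) * 0) by ring.
    eapply Rle_trans. apply exp_convex; lra. rewrite exp_0, exp_ln by lra. lra. }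
  assert (H2c : Rpower 2 (1 + alpha) = 2 * Rpower 2 alpha) by (rewrite Rpower_plus, Rpower_1 by lra; ring).
  assert (HQ1 : 0 <= (A + m * (Rpower 2 alpha * (1 + alpha) - 1) * B) / (Rpower 2 alpha * (1 + alpha))).
  { apply Rdiv_le_0_compat; [|nra]. assert (0 <= Rpower 2 alpha * (1 + alpha) - 1) by nra.
    assert (0 <= m * (Rpower 2 alpha * (1 + alpha) - 1)) by nra. nra. }
  assert (HQ2 : 0 <= ((Rpower 2 (1 + alpha) - 1) * A +
        m * (Rpower 2 alpha * (1 + alpha) - (Rpower 2 (1 + alpha) - 1)) * B) / (Rpower 2 alpha * (1 + alpha))).
  { apply Rdiv_le_0_compat; [|nra]. rewrite H2c.
    assert (0 <= Rpower 2 alpha * (1 + alpha) - (2 * Rpower 2 alpha - 1)) by nra.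
    assert (0 <= m * (Rpower 2 alpha * (1 + alpha) - (2 * Rpower 2 alpha - 1))) by nra. nra. }
  assert (Hq0 : 1 / q <> 0) by (apply Rgt_not_eq, Rdiv_lt_0_compat; lra).
  assert (Hp0 : 1 / p <> 0) by (apply Rgt_not_eq, Rdiv_lt_0_compat; lra).
  rewrite !(rp_powR _ (1 / q)) by auto.
  assert (HGp : 0 < Gamma (3 * p + 2)) by (apply Gamma_pos; lra).
  assert (HBG : Bt (p + 1) (2 * p + 1) <= Gamma (2 * p + 1) * Gamma (p + 1) / Gamma (3 * p + 2)).
  { pose proof (beta_gamma (p + 1) (2 * p + 1) ltac:(lra) ltac:(lra)) as HG.
    replace (p + 1 + (2 * p + 1)) with (3 * p + 2) in HG by ring.
    apply (Rmult_le_reg_r (Gamma (3 * p + 2))); auto. unfold Rdiv. rewrite Rmult_assoc, Rinv_l by lra. lra. }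
  assert (HBt : 0 <= Bt (p + 1) (2 * p + 1)) by (apply Bt_ge0; lra).
  rewrite (rp_powR _ (1 / p)) by (auto; lra).
  assert (Hr : rp (Bt (p + 1) (2 * p + 1)) (1 / p) <= rp (Gamma (2 * p + 1) * Gamma (p + 1) / Gamma (3 * p + 2)) (1 / p)).
  { apply rp_le_l. left; apply Rdiv_lt_0_compat; lra. lra. }
  assert (Hh : (v - a) ^ 4 / 96 = h ^ 4 / 6) by (unfold h; field).
  assert (Hh' : (- h) ^ 4 = h ^ 4) by ring.
  rewrite Hh' in R2. rewrite Hh.
  assert (Hh4 : 0 <= h ^ 4 / 6) by (replace (h ^ 4) with ((h ^ 2) ^ 2) by ring; pose proof (pow2_ge_0 (h ^ 2)); lra).
  set (X1 := rp ((A + m * (Rpower 2 alpha * (1 + alpha) - 1) * B) / (Rpower 2 alpha * (1 + alpha))) (1 / q)) in *.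
  set (X2 := rp (((Rpower 2 (1 + alpha) - 1) * A +
        m * (Rpower 2 alpha * (1 + alpha) - (Rpower 2 (1 + alpha) - 1)) * B) / (Rpower 2 alpha * (1 + alpha))) (1 / q)) in *.
  assert (0 <= X1) by apply rp_ge0. assert (0 <= X2) by apply rp_ge0.
  set (Y := rp (Bt (p + 1) (2 * p + 1)) (1 / p)) in *.
  set (Z := rp (Gamma (2 * p + 1) * Gamma (p + 1) / Gamma (3 * p + 2)) (1 / p)) in *.
  assert (0 <= Y) by apply rp_ge0.
  unfold Rminus at 1. eapply Rle_trans. apply Rabs_triang. rewrite Rabs_Ropp.
  assert (h ^ 4 / 6 * Y * X1 <= h ^ 4 / 6 * Z * X1).
  { apply Rmult_le_compat_r; auto. apply Rmult_le_compat_l; auto. }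
  assert (h ^ 4 / 6 * Y * X2 <= h ^ 4 / 6 * Z * X2).
  { apply Rmult_le_compat_r; auto. apply Rmult_le_compat_l; auto. }
  lra.
Qed.
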